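(* Let $d_\Phi=1$, let $\beta_\Phi\in\mathbb{R}^{d_Z}$ have all components nonzero, let $\beta_y\in\mathbb{R}^{d_Z}$, and let $b$ be an integer with $0\le b<d_Z$. Then $\mathcal{T}_{L_0}(b)=\{\theta\in\mathbb{R}:\|\beta_y-\theta\beta_\Phi\|_0\le b\}$ satisfies $$|\mathcal{T}_{L_0}(b)|\le\left\lfloor\frac{d_Z}{d_Z-b}\right\rfloor\le d_Z.$$ In particular, if $b<d_Z/2$ then $|\mathcal{T}_{L_0}(b)|\le1$ (point identification).
   Context: $\|v\|_0$ is the number of nonzero components of $v$. In the model $Y:=\theta^*\Phi(X)+g_y(Z,\epsilon_y)$ with scalar $\Phi$, $\beta_\Phi=\mathrm{Cov}(\Phi(X),Z)$, $\beta_y=\mathrm{Cov}(Y,Z)$, and $\|\beta_y-\theta\beta_\Phi\|_0\le b$ expresses that at most $b$ of the $d_Z$ candidate instruments are invalid. *)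

(* Defs.v *)
From mathcomp Require Import all_boot all_order all_algebra.
Set Implicit Arguments. Unset Strict Implicit. Unset Printing Implicit Defensive.
Import Order.TTheory GRing.Theory Num.Theory.
Local Open Scope ring_scope.

Definition l0norm (R : ringType) (n : nat) (v : 'rV[R]_n) : nat :=
  #|[set i : 'I_n | v 0 i != 0]|.

Definition TL0 (R : ringType) (n : nat) (betaPhi betay : 'rV[R]_n) (b : nat)
  (theta : R) : Prop := (l0norm (betay - theta *: betaPhi) <= b)%N.

(* |S| <= k for a possibly infinite set S : every finite duplicate-free
   list of elements of S has length at most k. *)
Definition card_le (T : eqType) (S : T -> Prop) (k : nat) : Prop :=
  forall s : seq T, uniq s -> (forall x, x \in s -> S x) -> (size s <= k)%N.

(* Main.v *)
Require Import Defs.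
From mathcomp Require Import all_boot all_order all_algebra.
From mathcomp Require Import zify ring.
Import Order.TTheory GRing.Theory Num.Theory.
Local Open Scope ring_scope.

Section Aux.
Variables (R : realFieldType) (dZ : nat) (betaPhi betay : 'rV[R]_dZ).
Hypothesis Hnz : forall i : 'I_dZ, betaPhi 0 i != 0.

Definition Zs (t : R) := [set i : 'I_dZ | betay 0 i - t * betaPhi 0 i == 0].
Definition Us (s : seq R) := [set i : 'I_dZ | has (fun t => i \in Zs t) s].

Lemma Zs_card t : (#|Zs t| + l0norm (betay - t *: betaPhi) = dZ)%N.
Proof.
have E := cardsC (Zs t); rewrite card_ord in E; rewrite -[X in _ = X]E /l0norm; congr (_ + _)%N.
apply: eq_card => i; rewrite !inE !mxE; by [].
Qed.

Lemma Zs_inj t u i : i \in Zs t -> i \in Zs u -> t = u.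
Proof.
rewrite !inE => /eqP H1 /eqP H2.
have : (t - u) * betaPhi 0 i = 0.
  have -> : (t - u) * betaPhi 0 i = (betay 0 i - u * betaPhi 0 i) - (betay 0 i - t * betaPhi 0 i) by ring.
  by rewrite H1 H2 subrr.
by move/eqP; rewrite mulf_eq0 (negbTE (Hnz i)) orbF subr_eq0 => /eqP.
Qed.

Lemma Us_card (b : nat) s : uniq s -> (forall x, x \in s -> TL0 betaPhi betay b x) ->
  (size s * (dZ - b) <= #|Us s|)%N.
Proof.
elim: s => [|t s IH] //= /andP [ts us] Hs.
have -> : Us (t :: s) = Zs t :|: Us s.
  by apply/setP => i; rewrite !inE /= inE.
have HI : Zs t :&: Us s = set0.
  apply/setP => i; rewrite in_setI in_set0 [i \in Us s]inE; apply/negbTE/negP => /andP [Ht /hasP [u us' Hu]].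
  move: (Zs_inj _ _ _ Ht Hu) => E; subst u; by rewrite us' in ts.
have := cardsUI (Zs t) (Us s); rewrite HI cards0 addn0 => ->.
rewrite mulSn; apply: leq_add; last first.
  by apply: IH => // x xs; apply: Hs; rewrite inE xs orbT.
have := Zs_card t; have := Hs t (mem_head _ _); rewrite /TL0.
move=> Hb Hc; move: Hb Hc; rewrite /TL0; move: (l0norm _) (#|Zs t|) => x y; lia.
Qed.
End Aux.

Theorem mainTheorem5 (R : realFieldType) (dZ : nat) (betaPhi betay : 'rV[R]_dZ)
  (b : nat) :
  (forall i : 'I_dZ, betaPhi 0 i != 0) ->
  (b < dZ)%N ->
  [/\ card_le (TL0 betaPhi betay b) (dZ %/ (dZ - b)),
      (dZ %/ (dZ - b) <= dZ)%N
    & ((b.*2 < dZ)%N -> card_le (TL0 betaPhi betay b) 1)].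
Proof.
move=> Hnz Hb.
have Hpos : (0 < dZ - b)%N by rewrite subn_gt0.
have C : card_le (TL0 betaPhi betay b) (dZ %/ (dZ - b)).
  move=> s us Hs; rewrite leq_divRL //.
  apply: leq_trans (@Us_card _ _ _ _ Hnz b s us Hs) _.
  by have := max_card (pred_of_set (Us R dZ betaPhi betay s)); rewrite card_ord.
split => //; first exact: leq_div.
move=> H2 s us Hs; apply: leq_trans (C s us Hs) _.
rewrite -ltnS ltn_divLR //; rewrite -addnn in H2; lia.
Qed.
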